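(* Let $G$ be a closed and continuous metric cyclic graph whose vertex set $V$ is homeomorphic to $S^1$, and let $\gamma=\inf_{u\in V}\gamma_V(u)$. Then the map $H:V\times[0,\gamma]\to V$, $H(u,r)=g_r(u)$, is continuous.
   Context: Identify $S^1$ with $[0,1)$; $d_{S^1}(x,y)\in[0,1)$ is the normalized counterclockwise distance from $x$ to $y$, and $[x,y]_V$ denotes the set of points of $V$ on the closed counterclockwise arc from $x$ to $y$. A directed graph $G=(V,E)$ (no loops, no opposite edges) with $V\subseteq S^1$ is cyclic if whenever $u_0\to u_1$, every $w\in V$ strictly counterclockwise-between $u_0$ and $u_1$ has $u_0\to w$ and $w\to u_1$. Define $\gamma_m(u_0)=\sup\{\sum_{i=0}^{m-1}d_{S^1}(u_i,u_{i+1}):u_0\to\cdots\to u_m\text{ in }G\}$ and $f_1(u)=u+\gamma_1(u)\bmod1$. $G$ is closed if $V$ is closed in $S^1$ (then $f_1(u)\in V$), and continuous if every $\gamma_m$ is continuous. $G$ is metric if $V$ carries a metric $d_V$ inducing the subspace topology from $S^1$ such that $d_V(u_0,u_1)<d_V(u_0,u_2)$ for every directed path $u_0\to u_1\to u_2$. Set $\gamma_V(u)=d_V(u,f_1(u))$. For $r\in[0,\gamma_V(u)]$, $g_r(u)$ is the unique point $w\in[u,f_1(u)]_V$ with $d_V(u,w)=r$. *)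

(* Defs.v *)
(* R : realType. S^1 is identified with [0,1). *)
From mathcomp Require Import all_boot all_order all_algebra.
From mathcomp Require Import all_classical all_reals.
Set Implicit Arguments. Unset Strict Implicit. Unset Printing Implicit Defensive.
Import Order.TTheory GRing.Theory Num.Theory.
Local Open Scope ring_scope.
Local Open Scope classical_set_scope.

Section CyclicGraphs.
Variable R : realType.

Definition frac01 (x : R) : R := x - (Num.floor x)%:~R.

Definition S1 : set R := [set x | 0 <= x < 1].

(* normalized counterclockwise distance from x to y *)
Definition dccw (x y : R) : R := frac01 (y - x).

(* the (symmetric) arc-length metric of S^1, giving its topology *)
Definition dcirc (x y : R) : R := Num.min (dccw x y) (dccw y x).

Record cyclic_graph (V : set R) (E : R -> R -> Prop) : Prop := {
  cg_sub : V `<=` S1;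
  cg_edge : forall u v, E u v -> V u /\ V v;
  cg_noloop : forall u, ~ E u u;
  cg_noopp : forall u v, E u v -> ~ E v u;
  cg_cyclic : forall u0 u1, E u0 u1 ->
     forall w, V w -> 0 < dccw u0 w < dccw u0 u1 -> E u0 w /\ E w u1 }.

Definition path_lengths (E : R -> R -> Prop) (m : nat) (u0 : R) : set R :=
  [set s | exists u : nat -> R, u 0%N = u0 /\
      (forall i, (i < m)%N -> E (u i) (u i.+1)) /\
      s = \sum_(i < m) dccw (u i) (u i.+1)].

Definition gamma_m (E : R -> R -> Prop) (m : nat) (u0 : R) : R :=
  sup (path_lengths E m u0).

Definition f1 (E : R -> R -> Prop) (u : R) : R := frac01 (u + gamma_m E 1 u).

Definition closed_V (V : set R) : Prop :=
  forall x, S1 x -> (forall e, 0 < e -> exists v, V v /\ dcirc x v < e) -> V x.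

Definition cont_on_V (V : set R) (f : R -> R) : Prop :=
  forall x, V x -> forall e, 0 < e -> exists2 d, 0 < d &
    forall y, V y -> dcirc x y < d -> `|f x - f y| < e.

Definition continuous_graph (V : set R) (E : R -> R -> Prop) : Prop :=
  forall m, cont_on_V V (gamma_m E m).

Record metric_for (V : set R) (E : R -> R -> Prop) (dV : R -> R -> R) : Prop := {
  mV_ge0 : forall x y, V x -> V y -> 0 <= dV x y;
  mV_eq0 : forall x y, V x -> V y -> (dV x y = 0 <-> x = y);
  mV_sym : forall x y, V x -> V y -> dV x y = dV y x;
  mV_tri : forall x y z, V x -> V y -> V z -> dV x z <= dV x y + dV y z;
  mV_top1 : forall x, V x -> forall e, 0 < e -> exists2 d, 0 < d &
              forall y, V y -> dcirc x y < d -> dV x y < e;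
  mV_top2 : forall x, V x -> forall e, 0 < e -> exists2 d, 0 < d &
              forall y, V y -> dV x y < d -> dcirc x y < e;
  mV_path : forall u0 u1 u2, E u0 u1 -> E u1 u2 -> dV u0 u1 < dV u0 u2 }.

Definition homeomorphic_S1 (V : set R) : Prop :=
  exists phi psi : R -> R,
    (forall x, V x -> S1 (phi x)) /\ (forall y, S1 y -> V (psi y)) /\
    (forall x, V x -> psi (phi x) = x) /\ (forall y, S1 y -> phi (psi y) = y) /\
    (forall x, V x -> forall e, 0 < e -> exists2 d, 0 < d &
        forall y, V y -> dcirc x y < d -> dcirc (phi x) (phi y) < e) /\
    (forall x, S1 x -> forall e, 0 < e -> exists2 d, 0 < d &
        forall y, S1 y -> dcirc x y < d -> dcirc (psi x) (psi y) < e).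

Definition gamma_V (E : R -> R -> Prop) (dV : R -> R -> R) (u : R) : R :=
  dV u (f1 E u).

Definition arcV (V : set R) (x y : R) : set R :=
  [set w | V w /\ dccw x w <= dccw x y].

Definition g_r (V : set R) (E : R -> R -> Prop) (dV : R -> R -> R) (r u : R) : R :=
  xget 0 [set w | arcV V u (f1 E u) w /\ dV u w = r].

Definition gamma_inf (V : set R) (E : R -> R -> Prop) (dV : R -> R -> R) : R :=
  inf [set gamma_V E dV u | u in V].

End CyclicGraphs.

(* Main.v *)
Require Import Defs.
From mathcomp Require Import all_boot all_order all_algebra.
From mathcomp Require Import all_classical all_reals all_analysis.
From mathcomp.algebra_tactics Require Import ring lra.
Set Implicit Arguments. Unset Strict Implicit. Unset Printing Implicit Defensive.
Import Order.TTheory GRing.Theory Num.Theory.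
Import numFieldNormedType.Exports.
Local Open Scope ring_scope.
Local Open Scope classical_set_scope.
Section Frac.
Variable R : realType.
Implicit Types x y z a b u : R.

Lemma frac_char x (k : int) : 0 <= x - k%:~R < 1 -> frac01 x = x - k%:~R.
Proof.
move=> /andP[h1 h2]; rewrite /frac01 (@floor_def _ x k) //.
by rewrite intrD1; apply/andP; split; lra.
Qed.

Lemma frac_ge0 x : 0 <= frac01 x.
Proof. by rewrite /frac01 subr_ge0 floor_le. Qed.

Lemma frac_lt1 x : frac01 x < 1.
Proof. have := floorD1_gt x; rewrite intrD1 /frac01; lra. Qed.

Lemma frac_id x : 0 <= x < 1 -> frac01 x = x.
Proof. by move=> h; rewrite (@frac_char x 0) ?subr0. Qed.

Lemma frac_shift x (k : int) : frac01 (x + k%:~R) = frac01 x.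
Proof.
rewrite (@frac_char _ (Num.floor x + k)) /frac01 intrD; first by ring.
have := frac_ge0 x; have := frac_lt1 x; rewrite /frac01 => ??.
apply/andP; split; lra.
Qed.

Lemma frac_fracD a b : frac01 (frac01 a + b) = frac01 (a + b).
Proof.
have -> : frac01 a + b = (a + b) + (- Num.floor a)%:~R.
  by rewrite /frac01 intrN; ring.
by rewrite frac_shift.
Qed.

Lemma frac_fracN a b : frac01 (b - frac01 a) = frac01 (b - a).
Proof.
have -> : b - frac01 a = (b - a) + (Num.floor a)%:~R.
  by rewrite /frac01; ring.
by rewrite frac_shift.
Qed.

Lemma frac_le x : 0 <= x -> frac01 x <= x.
Proof.
move=> x0; rewrite /frac01 lerBlDr lerDl.
have : (0 <= Num.floor x)%R by rewrite floor_ge_int.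
by rewrite -(ler_int R).
Qed.

Lemma S1_frac x : S1 (frac01 x).
Proof. by rewrite /S1 /= frac_ge0 frac_lt1. Qed.

Lemma frac_S1 x : S1 x -> frac01 x = x.
Proof. by move=> h; apply: frac_id. Qed.

Lemma dccw_frac a b : dccw (frac01 a) (frac01 b) = dccw a b.
Proof. by rewrite /dccw frac_fracN frac_fracD. Qed.

Lemma dcirc_frac a b : dcirc (frac01 a) (frac01 b) = dcirc a b.
Proof. by rewrite /dcirc !dccw_frac. Qed.

Lemma dcirc_le x y : dcirc x y <= `|x - y|.
Proof.
rewrite /dcirc /dccw; case: (leP x y) => h.
  rewrite distrC ger0_norm ?subr_ge0 //.
  by rewrite ge_min frac_le ?subr_ge0.
rewrite ger0_norm ?subr_ge0 ?(ltW h) //.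
by rewrite ge_min (frac_le (x := x - y)) ?orbT // subr_ge0 ltW.
Qed.

Lemma dcirc_ge0 x y : 0 <= dcirc x y.
Proof. by rewrite /dcirc le_min !frac_ge0. Qed.

Lemma dcirc_sym x y : dcirc x y = dcirc y x.
Proof. by rewrite /dcirc minC. Qed.

Lemma dccw_P u s : 0 <= s < 1 -> dccw u (frac01 (u + s)) = s.
Proof.
by move=> h; rewrite /dccw frac_fracD addrAC subrr add0r frac_id.
Qed.

Lemma P_dccw u x : S1 x -> frac01 (u + dccw u x) = x.
Proof.
by move=> h; rewrite /dccw addrC frac_fracD addrNK frac_S1.
Qed.

Lemma offset u u' : S1 u -> exists o, `|o| = dcirc u u' /\ u = frac01 (u' + o).
Proof.
move=> Su; rewrite /dcirc; case: (leP (dccw u u') (dccw u' u)) => h.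
  exists (- dccw u u'); split; first by rewrite normrN ger0_norm ?frac_ge0.
  by rewrite /dccw frac_fracN opprB addrC subrK frac_S1.
exists (dccw u' u); split; first by rewrite ger0_norm ?frac_ge0.
by rewrite P_dccw.
Qed.

Lemma dcirc0 x : dcirc x x = 0.
Proof. by rewrite /dcirc /dccw subrr frac_id ?lexx ?ltr01 // minxx. Qed.

End Frac.
Section Top.
Variable R : realType.

Lemma cont_eps (f : R -> R) :
  (forall x e, 0 < e -> exists2 d, 0 < d & forall y, `|x - y| < d -> `|f x - f y| < e) ->
  continuous f.
Proof.
move=> H x; apply/cvgrPdist_lt => e e0; have [d d0 Hd] := H x e e0.
by apply/nbhs_ballP; exists d => // y /= hy; apply: Hd.
Qed.

Lemma ivt_cont (f : R -> R) a b v : a <= b -> continuous f ->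
  Num.min (f a) (f b) <= v <= Num.max (f a) (f b) ->
  exists2 c, a <= c <= b & f c = v.
Proof.
move=> ab fc hv; have [c cin fcv] := IVT ab (continuous_subspaceT (A := `[a, b]) fc) hv.
by exists c => //; move: cin; rewrite in_itv.
Qed.
End Top.

Section Full.
Variable R : realType.

Lemma S1_dccw0 (x y : R) : S1 x -> S1 y -> dccw x y = 0 -> x = y.
Proof.
move=> Sx Sy h; have := P_dccw x Sy; rewrite h addr0 frac_S1 //.
Qed.

Lemma mid_between (a b : R) :
  Num.min a b <= (a + b) / 2 <= Num.max a b.
Proof.
apply/andP; split.
  rewrite ge_min; apply/orP; case: (leP a b) => ?; [left|right]; lra.
rewrite le_max; apply/orP; case: (leP a b) => ?; [right|left]; lra.
Qed.

Lemma V_full (V : set R) : V `<=` @S1 R -> homeomorphic_S1 V -> forall x, S1 x -> V x.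
Proof.
move=> VS [phi [psi [phiS [psiV [psiphi [phipsi [phic psic]]]]]]] p Sp.
apply: contrapT => nVp.
pose h y := frac01 (psi (frac01 y) - p).
have hpos : forall y, 0 < h y.
  move=> y; rewrite lt_neqAle frac_ge0 andbT; apply/eqP => /esym h0.
  have := S1_dccw0 Sp (VS _ (psiV _ (S1_frac y))) h0.
  by move=> eq; apply: nVp; rewrite eq; apply: psiV; apply: S1_frac.
have hlt : forall y, h y < 1 by move=> y; apply: frac_lt1.
have hc : continuous h.
  apply: cont_eps => y0 e e0.
  pose q0 := psi (frac01 y0); pose m := h y0.
  have me : 0 < Num.min e (Num.min m (1 - m)).
    by rewrite !lt_min e0 hpos /= subr_gt0 hlt.
  have [d d0 Hd] := psic (frac01 y0) (S1_frac _) _ me.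
  exists d => // y hy.
  have hq : dcirc q0 (psi (frac01 y)) < Num.min e (Num.min m (1 - m)).
    apply: Hd; first exact: S1_frac.
    by rewrite dcirc_frac; apply: le_lt_trans (dcirc_le _ _) hy.
  have [ofs [ho Eo]] := offset q0 (VS _ (psiV _ (S1_frac y))).
  rewrite dcirc_sym -ho !lt_min in hq.
  case/andP: hq => hoe /andP[hom hom'].
  rewrite /h Eo frac_fracD.
  have -> : frac01 (q0 + ofs - p) = frac01 (frac01 (q0 - p) + ofs).
    by rewrite frac_fracD; congr frac01; ring.
  have mdef : frac01 (q0 - p) = m by [].
  rewrite mdef.
  move: hoe hom hom'; rewrite !ltr_norml => /andP[? ?] /andP[? ?] /andP[? ?].
  rewrite frac_id; last by apply/andP; split; lra.
  have -> : m - (m + ofs) = - ofs by ring.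
  apply/andP; split; lra.
have hinj : forall y1 y2, S1 y1 -> S1 y2 -> h y1 = h y2 -> y1 = y2.
  move=> y1 y2 S1y1 S1y2; rewrite /h (frac_S1 S1y1) (frac_S1 S1y2) => e.
  have : psi y1 = psi y2.
    rewrite -(P_dccw p (VS _ (psiV _ S1y1))) -(P_dccw p (VS _ (psiV _ S1y2))).
    by rewrite /dccw e.
  by rewrite -{2}(phipsi y1) // -{2}(phipsi y2) // => ->.
have h10 : h 1 = h 0.
  rewrite /h; congr (frac01 (psi _ - p)).
  by have := frac_shift (0:R) 1; rewrite add0r.
have S0 : S1 (0:R) by rewrite /S1 /= lexx ltr01.
have Sh : S1 (1/2 : R) by rewrite /S1 /=; apply/andP; split; lra.
have h0h : h 0 != h (1/2).
  by apply/eqP => /(hinj _ _ S0 Sh) => /eqP; lra.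
pose v := (h 0 + h (1/2)) / 2.
have hv0 : h 0 != v by move: h0h; rewrite /v; apply: contra => /eqP ?; apply/eqP; lra.
have hvh : h (1/2) != v by move: h0h; rewrite /v; apply: contra => /eqP ?; apply/eqP; lra.
have [c1 /andP[c1a c1b] hc1] : exists2 c, 0 <= c <= 1/2 & h c = v.
  apply: ivt_cont => //; try lra; exact: mid_between.
have [c2 /andP[c2a c2b] hc2] : exists2 c, 1/2 <= c <= 1 & h c = v.
  apply: ivt_cont => //; first lra.
  rewrite h10 /v; move: (mid_between (h 0) (h (1/2))).
  by rewrite minC maxC.
have c10 : c1 != 0 by apply: contra hv0 => /eqP <-; rewrite hc1.
have c1h : c1 != 1/2 by apply: contra hvh => /eqP <-; rewrite hc1.
have c2h : c2 != 1/2 by apply: contra hvh => /eqP <-; rewrite hc2.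
have c21 : c2 != 1 by apply: contra hv0 => /eqP e; rewrite -h10 -e hc2.
have S1c1 : S1 c1 by rewrite /S1 /=; apply/andP; split; lra.
have S1c2 : S1 c2.
  rewrite /S1 /=; apply/andP; split; first lra.
  by rewrite lt_neqAle c21.
have := hinj _ _ S1c1 S1c2; rewrite hc1 hc2 => /(_ erefl) => e.
move: c1h c2h; rewrite e; lra.
Qed.
End Full.
Definition Pt {R : realType} (x s : R) := frac01 (x + s).

Section Graph.
Variables (R : realType) (V : set R) (E : R -> R -> Prop) (dV : R -> R -> R).
Hypotheses (cg : cyclic_graph V E) (met : metric_for V E dV).
Hypothesis VS : forall x, V x <-> S1 x.
Implicit Types (x a b s c w A B z : R).

Lemma VP x s : V (Pt x s).
Proof. by apply/VS; apply: S1_frac. Qed.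

Lemma pl1 x s : path_lengths E 1 x s -> exists v, E x v /\ s = dccw x v.
Proof.
case=> u [u0 [hE ->]]; exists (u 1%N); rewrite big_ord1 /= u0; split => //.
by have := hE 0%N isT; rewrite u0.
Qed.

Lemma pl1' x v : E x v -> path_lengths E 1 x (dccw x v).
Proof.
move=> h; exists (fun i => if i is 0%N then x else v); split => //; split.
  by case=> //.
by rewrite big_ord1.
Qed.

Lemma pl1_ub x : has_ubound (path_lengths E 1 x).
Proof.
by exists 1 => s /pl1 [v [_ ->]]; apply: ltW; apply: frac_lt1.
Qed.

Lemma pl1_empty x : ~ (exists s, path_lengths E 1 x s) -> gamma_m E 1 x = 0.
Proof.
move=> hn; rewrite /gamma_m.
have -> : path_lengths E 1 x = set0.
  by apply/seteqP; split => // s hs; exfalso; apply: hn; exists s.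
exact: sup0.
Qed.

Lemma L_ge0 x : 0 <= gamma_m E 1 x.
Proof.
case: (pselect (exists s, path_lengths E 1 x s)) => [[s hs]|hn]; last by rewrite pl1_empty.
have hs' := hs; have [v [_ sv]] := pl1 hs'.
apply: le_trans (ub_le_sup (pl1_ub x) hs).
by rewrite sv; apply: frac_ge0.
Qed.

Lemma L_le1 x : gamma_m E 1 x <= 1.
Proof.
case: (pselect (exists s, path_lengths E 1 x s)) => [[s hs]|hn]; last by rewrite pl1_empty.
apply: ge_sup; first by exists s.
by move=> y /pl1 [v [_ ->]]; apply: ltW; apply: frac_lt1.
Qed.

Lemma edge_lt x w : V w -> 0 < dccw x w < gamma_m E 1 x -> E x w.
Proof.
move=> Vw /andP[h1 h2].
case: (pselect (exists s, path_lengths E 1 x s)) => [[s hs]|hn]; last first.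
  by move: h2; rewrite pl1_empty // => h2; exfalso; move: h1 h2; lra.
have [y /pl1 [v [Exv ->]] hy] := sup_gt (ex_intro _ s hs) h2.
have := cg_cyclic cg Exv Vw; rewrite h1 hy => /(_ isT) [] //.
Qed.

Lemma dV_xx x : V x -> dV x x = 0.
Proof. by move=> Vx; have [_ ->] := mV_eq0 met Vx Vx. Qed.

Lemma dV_lip2 x A B : V x -> V A -> V B -> `|dV x A - dV x B| <= dV A B.
Proof.
move=> Vx VA VB; have h1 := mV_tri met Vx VA VB; have h2 := mV_tri met Vx VB VA.
rewrite (mV_sym met VB VA) in h2.
by rewrite ler_norml; apply/andP; split; lra.
Qed.

Lemma dV_lip1 A B z : V A -> V B -> V z -> `|dV A z - dV B z| <= dV A B.
Proof.
move=> VA VB Vz; have h1 := mV_tri met VA VB Vz; have h2 := mV_tri met VB VA Vz.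
rewrite (mV_sym met VB VA) in h2.
by rewrite ler_norml; apply/andP; split; lra.
Qed.

Lemma dcirc_Pt x a b : dcirc (Pt x a) (Pt x b) <= `|a - b|.
Proof.
rewrite /Pt dcirc_frac; apply: le_trans (dcirc_le _ _) _.
by have -> : x + a - (x + b) = a - b by ring.
Qed.

Lemma dccw_Pt x s : 0 <= s < 1 -> dccw x (Pt x s) = s.
Proof. exact: dccw_P. Qed.

Lemma Pt0 x : V x -> Pt x 0 = x.
Proof. by move=> /VS Sx; rewrite /Pt addr0 frac_S1. Qed.

Lemma cdV x c0 e : V x -> 0 < e -> exists2 d, 0 < d &
  forall c, `|c0 - c| < d -> `|dV x (Pt x c0) - dV x (Pt x c)| < e.
Proof.
move=> Vx e0; have [d d0 Hd] := mV_top1 met (VP x c0) e0.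
exists d => // c hc; apply: le_lt_trans (dV_lip2 Vx (VP _ _) (VP _ _)) _.
by apply: Hd; [exact: VP | apply: le_lt_trans (dcirc_Pt _ _ _) hc].
Qed.

Lemma mono_in x a b : V x -> 0 < a -> a < b -> b < gamma_m E 1 x ->
  gamma_m E 1 x <= 1 -> dV x (Pt x a) < dV x (Pt x b).
Proof.
move=> Vx a0 ab bL L1.
have Eb : E x (Pt x b).
  by apply: edge_lt; [exact: VP | rewrite dccw_Pt; apply/andP; split; lra].
have := cg_cyclic cg Eb (VP x a); rewrite !dccw_Pt; try (apply/andP; split; lra).
move=> /(_ _) [] ; first (apply/andP; split; lra).
by move=> h1 h2; apply: (mV_path met h1 h2).
Qed.

Lemma mono x a b : V x -> 0 < gamma_m E 1 x < 1 -> 0 <= a -> a < b ->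
  b <= gamma_m E 1 x -> dV x (Pt x a) < dV x (Pt x b).
Proof.
move=> Vx /andP[L0 L1] a0 ab bL.
case: (ltrP 0 a) => ha; last first.
  have -> : a = 0 by lra.
  rewrite Pt0 // dV_xx // lt_neqAle (mV_ge0 met Vx (VP x b)) andbT.
  apply/eqP => /esym /(mV_eq0 met Vx (VP x b)) eq.
  have := dccw_Pt x (s := b); rewrite -eq /dccw subrr frac_id ?lexx ?ltr01 //.
  by move=> /(_ _) h; have := h ltac:(apply/andP; split; lra); lra.
case: (ltrP b (gamma_m E 1 x)) => hb; first exact: mono_in (ltW L1).
pose a' := (a + b) / 2.
have h1 : dV x (Pt x a) < dV x (Pt x a').
  apply: mono_in => //; rewrite /a'; try lra.
suff : dV x (Pt x a') <= dV x (Pt x b) by lra.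
rewrite leNgt; apply/negP => hlt.
have [d d0 Hd] := cdV b (e := dV x (Pt x a') - dV x (Pt x b)) Vx ltac:(lra).
pose c := b - Num.min d (b - a') / 2.
have hm1 : 0 < Num.min d (b - a') by rewrite lt_min d0 /a'; lra.
have hm2 : Num.min d (b - a') <= d by rewrite ge_min lexx.
have hm3 : Num.min d (b - a') <= b - a' by rewrite ge_min lexx orbT.
have h2 : dV x (Pt x a') < dV x (Pt x c).
  apply: mono_in => //; rewrite /c /a' in hm3 *; lra.
have := Hd c; rewrite /c.
have -> : b - (b - Num.min d (b - a') / 2) = Num.min d (b - a') / 2 by ring.
rewrite ger0_norm; last lra.
move=> /(_ ltac:(lra)); rewrite ltr_norml => /andP[h3 _].
rewrite /c in h2; lra.
Qed.

Lemma mono_le x a b : V x -> 0 < gamma_m E 1 x < 1 -> 0 <= a -> a <= b ->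
  b <= gamma_m E 1 x -> dV x (Pt x a) <= dV x (Pt x b).
Proof.
move=> Vx hL a0 ab bL; case: (ltrP a b) => h.
  by apply: ltW; apply: mono.
by have -> : a = b by lra.
Qed.

Lemma dccw_xx x : dccw x x = 0.
Proof. by rewrite /dccw subrr frac_id // lexx ltr01. Qed.

Lemma exist_c x r : V x -> 0 < gamma_m E 1 x < 1 -> 0 <= r <= dV x (f1 E x) ->
  exists2 c, 0 <= c <= gamma_m E 1 x & dV x (Pt x c) = r.
Proof.
move=> Vx /andP[L0 L1] /andP[r0 r1].
have := @ivt_cont _ (fun c => dV x (Pt x c)) 0 (gamma_m E 1 x) r (ltW L0).
apply.
  by apply: cont_eps => c0 e e0; apply: cdV.
rewrite /= Pt0 // dV_xx //; apply/andP; split.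
  by rewrite ge_min r0.
by rewrite le_max r1 orbT.
Qed.

Lemma g_char x r : V x -> 0 < gamma_m E 1 x < 1 -> 0 <= r <= gamma_V E dV x ->
  exists t, [/\ 0 <= t <= gamma_m E 1 x, g_r V E dV r x = Pt x t & dV x (Pt x t) = r].
Proof.
move=> Vx hL hr; have /andP[L0 L1] := hL.
have [c /andP[c0 c1] hc] := exist_c Vx hL hr.
have dL : dccw x (f1 E x) = gamma_m E 1 x by rewrite /f1 dccw_P // (ltW L0).
have : [set w | arcV V x (f1 E x) w /\ dV x w = r] (xget 0 [set w | arcV V x (f1 E x) w /\ dV x w = r]).
  apply: xgetPex.
  exists (Pt x c); split => //; split; first exact: VP.
  by rewrite dL dccw_Pt //; apply/andP; split => //; lra.
rewrite -/(g_r V E dV r x); set g := g_r V E dV r x.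
move=> [[Vg hle] hd]; exists (dccw x g); split.
- by rewrite frac_ge0 -dL.
- by rewrite /Pt P_dccw //; apply/VS.
- by rewrite /Pt P_dccw //; apply/VS.
Qed.

Lemma gi_le x : V x -> gamma_inf V E dV <= gamma_V E dV x.
Proof.
move=> Vx; rewrite /gamma_inf; apply: ge_inf; last by exists x.
exists 0 => y [u Vu <-]; rewrite /gamma_V; apply: (mV_ge0 met Vu).
exact: VP.
Qed.

Lemma Lpos x : V x -> 0 < gamma_inf V E dV -> 0 < gamma_m E 1 x < 1.
Proof.
move=> Vx gi; have := gi_le Vx; have := L_ge0 x; have := L_le1 x.
case: (ltrP 0 (gamma_m E 1 x)) => h0; case: (ltrP (gamma_m E 1 x) 1) => h1.
- by [].
- move=> hL1 hL0 hg; exfalso; have eq : gamma_m E 1 x = 1 by lra.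
  move: hg; rewrite /gamma_V /f1 eq (_ : x + 1 = x + (1%:~R)) // frac_shift frac_S1; last exact/VS.
  by rewrite dV_xx //; lra.
- move=> hL1 hL0 hg; exfalso; have eq : gamma_m E 1 x = 0 by lra.
  move: hg; rewrite /gamma_V /f1 eq addr0 frac_S1; last exact/VS.
  by rewrite dV_xx //; lra.
- move=> hL1 hL0 hg; exfalso; lra.
Qed.

Lemma g0 x : V x -> g_r V E dV 0 x = x.
Proof.
move=> Vx; have : [set w | arcV V x (f1 E x) w /\ dV x w = 0] (xget 0 [set w | arcV V x (f1 E x) w /\ dV x w = 0]).
  apply: xgetPex.
  exists x; split; last exact: dV_xx.
  by split => //; rewrite dccw_xx frac_ge0.
rewrite -/(g_r V E dV 0 x) => [[[Vg _] hd]].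
by apply/esym; apply/(mV_eq0 met Vx Vg).
Qed.

Lemma Pt_shift u u' o c : u = frac01 (u' + o) -> Pt u c = Pt u' (o + c).
Proof. by move=> ->; rewrite /Pt frac_fracD addrA. Qed.

Lemma min_split (p q k : R) : k < Num.min p q -> k < p /\ k < q.
Proof. by rewrite lt_min => /andP. Qed.

Section Pos.
Hypothesis Lc : cont_on_V V (gamma_m E 1).
Hypothesis gp : 0 < gamma_inf V E dV.

Lemma lower u s0 r e : V u -> 0 <= s0 <= gamma_m E 1 u -> dV u (Pt u s0) = r -> 0 < e ->
  exists2 d, 0 < d & forall u' r' t o, V u' -> dcirc u u' < d -> `|o| < d ->
   u = frac01 (u' + o) -> `|r - r'| < d -> 0 <= t <= gamma_m E 1 u' ->
   dV u' (Pt u' t) = r' -> o + s0 - e < t.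
Proof.
move=> Vu /andP[s00 s0L] hr e0; have /andP[Lu0 Lu1] := Lpos Vu gp.
case: (ltrP s0 (e/2)) => hs.
  exists (e/8); first lra.
  move=> u' r' t o Vu' _ ho _ _ /andP[t0 _] _.
  move: ho; rewrite ltr_norml => /andP[? ?]; lra.
pose a := s0 - e/4.
have m1p : 0 < r - dV u (Pt u a).
  rewrite -hr subr_gt0; apply: mono => //; rewrite ?Lpos //; rewrite /a; lra.
have [dL dL0 HdL] := Lc Vu (e := e/8) ltac:(lra).
have [dm dm0 Hdm] := mV_top1 met Vu (e := (r - dV u (Pt u a))/2) ltac:(lra).
exists (Num.min (e/8) (Num.min dL (Num.min dm ((r - dV u (Pt u a))/2)))).
  by rewrite !lt_min dL0 dm0 /=; apply/andP; split; lra.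
move=> u' r' t o Vu' hd ho Eo hrr /andP[t0 tL] hr'.
have [hd1 /min_split [hd2 /min_split [hd3 hd4]]] := min_split hd.
have [ho1 /min_split [ho2 /min_split [ho3 ho4]]] := min_split ho.
have [hr1 /min_split [hr2 /min_split [hr3 hr4]]] := min_split hrr.
have hLL := HdL _ Vu' hd2; have hdm := Hdm _ Vu' hd3.
move: ho1 hLL hr4; rewrite !ltr_norml => /andP[? ?] /andP[? ?] /andP[? ?].
rewrite ltNge; apply/negP => ht.
have hLu' := Lpos Vu' gp.
have hmono := @mono_le u' t (o + a) Vu' hLu' t0 ltac:(rewrite /a; lra) ltac:(rewrite /a; lra).
rewrite -(Pt_shift _ Eo) hr' in hmono.
have := dV_lip1 Vu' Vu (VP u a); rewrite (mV_sym met Vu' Vu).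
rewrite ler_norml => /andP[? ?]; lra.
Qed.

Lemma upper u s0 r e : V u -> 0 <= s0 <= gamma_m E 1 u -> dV u (Pt u s0) = r -> 0 < e ->
  exists2 d, 0 < d & forall u' r' t o, V u' -> dcirc u u' < d -> `|o| < d ->
   u = frac01 (u' + o) -> `|r - r'| < d -> 0 <= t <= gamma_m E 1 u' ->
   dV u' (Pt u' t) = r' -> t < o + s0 + e.
Proof.
move=> Vu /andP[s00 s0L] hr e0; have /andP[Lu0 Lu1] := Lpos Vu gp.
have [dL dL0 HdL] := Lc Vu (e := e/8) ltac:(lra).
case: (ltrP (gamma_m E 1 u - s0) (e/2)) => hs.
  exists (Num.min (e/8) dL); first by rewrite lt_min dL0; apply/andP; split; lra.
  move=> u' r' t o Vu' hd ho _ _ /andP[t0 tL] _.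
  have [hd1 hd2] := min_split hd; have [ho1 ho2] := min_split ho.
  have hLL := HdL _ Vu' hd2.
  move: ho1 hLL; rewrite !ltr_norml => /andP[? ?] /andP[? ?]; lra.
pose b := s0 + e/4.
have m2p : 0 < dV u (Pt u b) - r.
  rewrite -hr subr_gt0; apply: mono => //; rewrite ?Lpos //; rewrite /b; lra.
have [dm dm0 Hdm] := mV_top1 met Vu (e := (dV u (Pt u b) - r)/2) ltac:(lra).
exists (Num.min (e/8) (Num.min dL (Num.min dm ((dV u (Pt u b) - r)/2)))).
  by rewrite !lt_min dL0 dm0 /=; apply/andP; split; lra.
move=> u' r' t o Vu' hd ho Eo hrr /andP[t0 tL] hr'.
have [hd1 /min_split [hd2 /min_split [hd3 hd4]]] := min_split hd.
have [ho1 /min_split [ho2 /min_split [ho3 ho4]]] := min_split ho.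
have [hr1 /min_split [hr2 /min_split [hr3 hr4]]] := min_split hrr.
have hLL := HdL _ Vu' hd2; have hdm := Hdm _ Vu' hd3.
move: ho1 hLL hr4; rewrite !ltr_norml => /andP[? ?] /andP[? ?] /andP[? ?].
rewrite ltNge; apply/negP => ht.
have hLu' := Lpos Vu' gp.
have hmono := @mono_le u' (o + b) t Vu' hLu' ltac:(rewrite /b; lra) ltac:(rewrite /b; lra) tL.
rewrite -(Pt_shift _ Eo) hr' in hmono.
have := dV_lip1 Vu' Vu (VP u b); rewrite (mV_sym met Vu' Vu).
rewrite ler_norml => /andP[? ?]; lra.
Qed.

Lemma main_pos u r : V u -> 0 <= r <= gamma_inf V E dV ->
  forall e, 0 < e -> exists2 d, 0 < d &
    forall u' r', V u' -> 0 <= r' <= gamma_inf V E dV ->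
      dcirc u u' < d -> `|r - r'| < d ->
      dcirc (g_r V E dV r u) (g_r V E dV r' u') < e.
Proof.
move=> Vu /andP[r0 rG] e e0.
have hrV : 0 <= r <= gamma_V E dV u.
  by rewrite r0 /=; apply: le_trans rG (gi_le Vu).
have [s0 [hs0 gu hr]] := g_char Vu (Lpos Vu gp) hrV.
have [d1 d10 H1] := lower Vu hs0 hr e0.
have [d2 d20 H2] := upper Vu hs0 hr e0.
exists (Num.min d1 d2); first by rewrite lt_min d10 d20.
move=> u' r' Vu' /andP[r'0 r'G] hd hrr.
have [hd1 hd2] := min_split hd; have [hr1 hr2] := min_split hrr.
have hrV' : 0 <= r' <= gamma_V E dV u'.
  by rewrite r'0 /=; apply: le_trans r'G (gi_le Vu').
have [t [ht gu' hr']] := g_char Vu' (Lpos Vu' gp) hrV'.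
have [ofs [ho Eo]] := offset u' (proj1 (VS u) Vu).
have ho1 : `|ofs| < d1 by rewrite ho.
have ho2 : `|ofs| < d2 by rewrite ho.
have l1 := H1 _ _ _ _ Vu' hd1 ho1 Eo hr1 ht hr'.
have l2 := H2 _ _ _ _ Vu' hd2 ho2 Eo hr2 ht hr'.
rewrite gu gu' (Pt_shift _ Eo); apply: le_lt_trans (dcirc_Pt _ _ _) _.
rewrite ltr_norml; apply/andP; split; lra.
Qed.
End Pos.

End Graph.
Theorem lemma4p7 (R : realType) (V : set R) (E : R -> R -> Prop) (dV : R -> R -> R) :
  cyclic_graph V E -> closed_V V -> continuous_graph V E -> metric_for V E dV ->
  homeomorphic_S1 V ->
  forall u r, V u -> 0 <= r <= gamma_inf V E dV ->
  forall e, 0 < e -> exists2 d, 0 < d &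
    forall u' r', V u' -> 0 <= r' <= gamma_inf V E dV ->
      dcirc u u' < d -> `|r - r'| < d ->
      dcirc (g_r V E dV r u) (g_r V E dV r' u') < e.
Proof.
move=> cg cl cont met hom u r Vu hr e e0.
have VS : forall x, V x <-> S1 x.
  by move=> x; split; [apply: (cg_sub cg) | apply: V_full (cg_sub cg) hom x].
case: (ltrP 0 (gamma_inf V E dV)) => gp.
  exact: (main_pos cg met VS (cont 1%N) gp Vu hr e0).
have r0 : r = 0 by move: hr => /andP[? ?]; lra.
exists e => // u' r' Vu' hr' hd _.
have r'0 : r' = 0 by move: hr' => /andP[? ?]; lra.
by rewrite r0 r'0 (g0 met Vu) (g0 met Vu').
Qed.
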